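(* For every $i\geq 0$ we have $$T_i=(-1)^i\left(\omega_D-\frac{N_{i-1}}{c_{i+1}}\right)\quad\text{and}\quad N_i=\frac{\sqrt\Delta}{c_{i+1}}-\frac{N_{i-1}}{c_{i+1}^2}.$$
   Context: $D>1$ squarefree, $K=\mathbb{Q}(\sqrt D)$, $\Delta$ its discriminant, $\alpha'$ the Galois conjugate and $N(\alpha)=\alpha\alpha'$ the norm. $\omega_D=\sqrt D$ if $D\equiv 2,3\pmod 4$ and $\omega_D=\frac{1+\sqrt D}2$ if $D\equiv1\pmod4$; $\omega_D=[u_0;u_1,u_2,\dots]$ its continued fraction. Define $p_{-1}=1$, $q_{-1}=0$, $p_0=u_0$, $q_0=1$, $p_{i+1}=u_{i+1}p_i+p_{i-1}$, $q_{i+1}=u_{i+1}q_i+q_{i-1}$ (so $p_i/q_i=[u_0;u_1,\dots,u_i]$), and $\alpha_i=p_i-q_i\omega_D'\in\mathcal{O}_K$ for $i\geq-1$. Let $N_i=|N(\alpha_i)|$ (so $N_{-1}=1$). Define $T_i$ by $\alpha_{i-1}\alpha_i'=T_i+(-1)^{i+1}\omega_D$; explicitly $T_i=p_i(p_{i-1}-q_{i-1})-q_iq_{i-1}\frac{D-1}4$ if $D\equiv1\pmod4$ and $T_i=p_ip_{i-1}-Dq_iq_{i-1}$ if $D\equiv2,3\pmod4$. Finally $c_i=[u_i;u_{i+1},u_{i+2},\dots]$ (the complete quotients). *)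

(* Defs.v *)
From Stdlib Require Import Reals ZArith.
Open Scope R_scope.

Definition squarefree (D : Z) : Prop :=
  forall k : Z, Z.divide (k * k) D -> (k * k = 1)%Z.

Definition is1mod4 (D : Z) : bool := Z.eqb (Z.modulo D 4) 1.

Definition omega (D : Z) : R :=
  if is1mod4 D then (1 + sqrt (IZR D)) / 2 else sqrt (IZR D).
Definition omega' (D : Z) : R :=
  if is1mod4 D then (1 - sqrt (IZR D)) / 2 else - sqrt (IZR D).

Definition Kdisc (D : Z) : Z := if is1mod4 D then D else (4 * D)%Z.

(* floor; Int_part x = up x - 1 is the floor of x *)
Definition flr (x : R) : Z := Int_part x.

(* complete quotients c_i = [u_i; u_{i+1}, ...] of omega_D: c_0 = omega_D,
   c_{i+1} = 1 / (c_i - floor c_i) *)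
Fixpoint cq (D : Z) (i : nat) : R :=
  match i with
  | O => omega D
  | S n => 1 / (cq D n - IZR (flr (cq D n)))
  end.

Definition u (D : Z) (i : nat) : Z := flr (cq D i).

Fixpoint ppq (D : Z) (k : nat) : (Z * Z) * (Z * Z) :=
  (* returns ((p_{k-1}, q_{k-1}), (p_k, q_k)) *)
  match k with
  | O => ((1%Z, 0%Z), (u D 0, 1%Z))
  | S n =>
      let '((pm, qm), (p0, q0)) := ppq D n in
      ((p0, q0), (u D (S n) * p0 + pm, u D (S n) * q0 + qm)%Z)
  end.

Definition p (D : Z) (i : nat) : Z := fst (snd (ppq D i)).
Definition q (D : Z) (i : nat) : Z := snd (snd (ppq D i)).
(* p_{i-1}, q_{i-1} for i >= 0 (so pm D 0 = p_{-1} = 1, qm D 0 = q_{-1} = 0) *)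
Definition pm (D : Z) (i : nat) : Z := fst (fst (ppq D i)).
Definition qm (D : Z) (i : nat) : Z := snd (fst (ppq D i)).

(* alpha = a - b omega_D', its conjugate alpha' = a - b omega_D,
   absolute norm |N(alpha)| = |alpha alpha'| *)
Definition absnorm (D a b : Z) : R :=
  Rabs ((IZR a - IZR b * omega' D) * (IZR a - IZR b * omega D)).

(* N_i = |N(alpha_i)| and Nm D i = N_{i-1} (Nm D 0 = N_{-1} = 1) *)
Definition Nrm (D : Z) (i : nat) : R := absnorm D (p D i) (q D i).
Definition Nm (D : Z) (i : nat) : R := absnorm D (pm D i) (qm D i).

Definition T (D : Z) (i : nat) : Z :=
  if is1mod4 D then
    (p D i * (pm D i - qm D i) - q D i * qm D i * ((D - 1) / 4))%Z
  else (p D i * pm D i - D * q D i * qm D i)%Z.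

(* Main.v *)
Require Import Defs.
From Stdlib Require Import Reals ZArith Lra Lia Psatz.
Open Scope R_scope.

Lemma ppq_S D n : ppq D (S n) =
  ((p D n, q D n), (u D (S n) * p D n + pm D n, u D (S n) * q D n + qm D n)%Z).
Proof. unfold p, q, pm, qm; simpl. destruct (ppq D n) as [[a b] [c d]]; reflexivity. Qed.

Lemma p_S D n : p D (S n) = (u D (S n) * p D n + pm D n)%Z.
Proof. unfold p at 1; rewrite ppq_S; reflexivity. Qed.
Lemma q_S D n : q D (S n) = (u D (S n) * q D n + qm D n)%Z.
Proof. unfold q at 1; rewrite ppq_S; reflexivity. Qed.
Lemma pm_S D n : pm D (S n) = p D n.
Proof. unfold pm at 1; rewrite ppq_S; reflexivity. Qed.
Lemma qm_S D n : qm D (S n) = q D n.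
Proof. unfold qm at 1; rewrite ppq_S; reflexivity. Qed.

Lemma flr_ge1 x : 1 < x -> (1 <= flr x)%Z.
Proof.
  intro H. unfold flr. destruct (base_Int_part x) as [H1 H2].
  assert (0 < Int_part x)%Z by (apply lt_IZR; lra). lia.
Qed.

Lemma flr_spec x : IZR (flr x) <= x /\ x < IZR (flr x) + 1.
Proof. unfold flr. destruct (base_Int_part x). lra. Qed.

Lemma det D n :
  IZR (p D n) * IZR (qm D n) - IZR (pm D n) * IZR (q D n) = - (-1) ^ n.
Proof.
  induction n.
  - unfold p, q, pm, qm; simpl. lra.
  - rewrite p_S, q_S, pm_S, qm_S, !plus_IZR, !mult_IZR. simpl.
    replace ((IZR (u D (S n)) * IZR (p D n) + IZR (pm D n)) * IZR (q D n) -
             IZR (p D n) * (IZR (u D (S n)) * IZR (q D n) + IZR (qm D n)))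
      with (- (IZR (p D n) * IZR (qm D n) - IZR (pm D n) * IZR (q D n))) by ring.
    rewrite IHn. ring.
Qed.

Lemma sqrtD_gt1 D : (1 < D)%Z -> 1 < sqrt (IZR D).
Proof.
  intro H. apply IZR_lt in H. rewrite <- sqrt_1. apply sqrt_lt_1_alt. lra.
Qed.

Lemma omega_gt1 D : (1 < D)%Z -> 1 < omega D.
Proof. intro H. pose proof (sqrtD_gt1 D H). unfold omega; destruct (is1mod4 D); lra. Qed.

Lemma omega'_lt0 D : (1 < D)%Z -> omega' D < 0.
Proof. intro H. pose proof (sqrtD_gt1 D H). unfold omega'; destruct (is1mod4 D); lra. Qed.

Lemma omega_diff D : (1 < D)%Z -> omega D - omega' D = sqrt (IZR (Kdisc D)).
Proof.
  intro H. unfold omega, omega', Kdisc. destruct (is1mod4 D).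
  - field.
  - rewrite mult_IZR, sqrt_mult by (apply IZR_le; lia).
    replace (IZR 4) with (2*2) by (simpl; ring). rewrite sqrt_square by lra. ring.
Qed.

Lemma noZsq D a b : (1 < D)%Z -> squarefree D -> (1 <= b)%Z -> (D * b * b = a * a)%Z -> False.
Proof.
  intros HD Hsf Hb E.
  set (g := Z.gcd a b).
  assert (Hg : (0 < g)%Z).
  { assert (0 <= g)%Z by apply Z.gcd_nonneg.
    assert (g <> 0)%Z. { intro G. apply Z.gcd_eq_0 in G. lia. } lia. }
  destruct (Z.gcd_divide_l a b) as [a' Ha].
  destruct (Z.gcd_divide_r a b) as [b' Hb'].
  fold g in Ha, Hb'.
  assert (Hc : Z.gcd a' b' = 1%Z).
  { assert (a' = a / g)%Z as -> by (rewrite Ha, Z.div_mul; lia).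
    assert (b' = b / g)%Z as -> by (rewrite Hb', Z.div_mul; lia).
    apply Z.gcd_div_gcd; auto; lia. }
  clearbody g.
  assert (E' : (D * b' * b' = a' * a')%Z).
  { subst a b. apply (Z.mul_reg_l _ _ (g*g)); [nia|]. nia. }
  assert (Hd : (b' | a')%Z).
  { apply (Z.gauss _ a'). exists (D * b')%Z. lia. rewrite Z.gcd_comm; exact Hc. }
  assert (Hd1 : (b' | 1)%Z).
  { rewrite <- Hc. apply Z.gcd_greatest; auto. apply Z.divide_refl. }
  apply Z.divide_1_r in Hd1.
  assert (D = a' * a')%Z by (destruct Hd1; subst; lia).
  assert (a' * a' = 1)%Z. { apply Hsf. rewrite H. apply Z.divide_refl. }
  lia.
Qed.

Lemma irr D a b : (1 < D)%Z -> squarefree D -> (1 <= b)%Z -> omega D * IZR b <> IZR a.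
Proof.
  intros HD Hsf Hb E.
  assert (Hs : sqrt (IZR D) * sqrt (IZR D) = IZR D)
    by (apply sqrt_sqrt; apply IZR_le; lia).
  assert (exists a0, sqrt (IZR D) * IZR b = IZR a0) as [a0 Ha0].
  { unfold omega in E; destruct (is1mod4 D).
    - exists (2*a - b)%Z. rewrite minus_IZR, mult_IZR, <- E. simpl. field.
    - exists a. exact E. }
  apply (noZsq D a0 b HD Hsf Hb). apply eq_IZR.
  rewrite !mult_IZR, <- Ha0.
  transitivity (sqrt (IZR D) * sqrt (IZR D) * IZR b * IZR b); [rewrite Hs; ring | ring].
Qed.

Definition f D n := cq D n - IZR (u D n).

Lemma fpos D (HD : (1 < D)%Z) (Hsf : squarefree D) n :
  omega D * (IZR (q D n) + IZR (qm D n) * f D n) = IZR (p D n) + IZR (pm D n) * f D n ->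
  (1 <= q D n)%Z -> 0 < f D n < 1.
Proof.
  intros A H1.
  destruct (flr_spec (cq D n)) as [S1 S2].
  unfold f, u. split; [|lra].
  destruct (Rle_lt_or_eq_dec _ _ S1) as [L|E]; [lra|].
  exfalso. apply (irr D (p D n) (q D n) HD Hsf H1).
  unfold f, u in A. rewrite E in A. rewrite Rminus_diag, !Rmult_0_r, !Rplus_0_r in A.
  exact A.
Qed.

Lemma inv D (HD : (1 < D)%Z) (Hsf : squarefree D) n :
  omega D * (IZR (q D n) + IZR (qm D n) * f D n) = IZR (p D n) + IZR (pm D n) * f D n
  /\ (1 <= q D n)%Z /\ (0 <= qm D n)%Z /\ (1 <= p D n)%Z /\ (1 <= pm D n)%Z.
Proof.
  induction n.
    + assert (1 <= u D 0)%Z by (apply flr_ge1, omega_gt1, HD).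
      unfold f, p, q, pm, qm; simpl.
      repeat split; try lia. ring.
    + destruct IHn as [A [H1 [H2 [H3 H4]]]].
      destruct (fpos D HD Hsf n A H1) as [F1 F2].
      assert (Hc : cq D (S n) = 1 / f D n) by reflexivity.
      assert (Hu : (1 <= u D (S n))%Z).
      { apply flr_ge1. rewrite Hc. apply (Rmult_lt_reg_r (f D n)); auto.
        unfold Rdiv. rewrite Rmult_assoc, Rinv_l; lra. }
      rewrite p_S, q_S, pm_S, qm_S.
      repeat split; try nia.
      unfold f at 1 2. rewrite Hc, !plus_IZR, !mult_IZR.
      set (w := omega D) in *. set (x := f D n) in *.
      transitivity (w * (IZR (q D n) + IZR (qm D n) * x) / x).
      { field. lra. }
      rewrite A. field. lra.
Qed.

Lemma pow_m1 n : (-1) ^ n = 1 \/ (-1) ^ n = -1.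
Proof. induction n; simpl; [left; ring|]. destruct IHn as [E|E]; rewrite E; [right|left]; ring. Qed.

Lemma Tform D (HD : (1 < D)%Z) i :
  IZR (T D i) = (IZR (pm D i) - IZR (qm D i) * omega' D) * (IZR (p D i) - IZR (q D i) * omega D)
    + (-1) ^ i * omega D.
Proof.
  pose proof (det D i) as Hd.
  assert (Hs : sqrt (IZR D) * sqrt (IZR D) = IZR D)
    by (apply sqrt_sqrt; apply IZR_le; lia).
  unfold T, omega, omega'. destruct (is1mod4 D) eqn:E.
  - apply Z.eqb_eq in E.
    assert (H4 : (4 * ((D - 1) / 4) = D - 1)%Z).
    { pose proof (Z.div_mod (D-1) 4 ltac:(lia)). pose proof (Z.mod_pos_bound (D-1) 4 ltac:(lia)).
      pose proof (Z.div_mod D 4 ltac:(lia)). lia. }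
    assert (H4' : IZR ((D - 1) / 4) = (IZR D - 1) / 4).
    { apply IZR_eq in H4. rewrite mult_IZR, minus_IZR in H4. simpl in H4. lra. }
    rewrite minus_IZR, !mult_IZR, minus_IZR, H4'.
    replace ((-1) ^ i) with (- (IZR (p D i) * IZR (qm D i) - IZR (pm D i) * IZR (q D i))) by lra.
    set (s0 := sqrt (IZR D)) in *. clearbody s0. rewrite <- Hs. field.
  - rewrite minus_IZR, !mult_IZR.
    replace ((-1) ^ i) with (- (IZR (p D i) * IZR (qm D i) - IZR (pm D i) * IZR (q D i))) by lra.
    set (s0 := sqrt (IZR D)) in *. clearbody s0. rewrite <- Hs. ring.
Qed.

Theorem lemma4 (D : Z) (HD : (1 < D)%Z) (Hsf : squarefree D) (i : nat) :
  IZR (T D i) = (-1) ^ i * (omega D - Nm D i / cq D (S i)) /\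
  Nrm D i = sqrt (IZR (Kdisc D)) / cq D (S i) - Nm D i / (cq D (S i)) ^ 2.
Proof.
  destruct (inv D HD Hsf i) as [A [H1 [H2 [H3 H4]]]].
  destruct (fpos D HD Hsf i A H1) as [F1 F2].
  pose proof (det D i) as Hdet.
  pose proof (Tform D HD i) as HT.
  pose proof (omega_diff D HD) as Hdiff.
  pose proof (omega'_lt0 D HD) as Hw'.
  assert (Hc : cq D (S i) = 1 / f D i) by reflexivity.
  unfold Nrm, Nm, absnorm. rewrite HT.
  set (c := cq D (S i)) in *.
  set (s := sqrt (IZR (Kdisc D))) in *.
  set (w := omega D) in *. set (w' := omega' D) in *.
  set (sg := (-1) ^ i) in *.
  assert (Hsg : sg = 1 \/ sg = -1) by apply pow_m1.
  apply IZR_le in H1, H2, H3, H4.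
  set (P := IZR (p D i)) in *. set (Q := IZR (q D i)) in *.
  set (Pm := IZR (pm D i)) in *. set (Qm := IZR (qm D i)) in *.
  set (x := f D i) in *. clearbody c s w w' sg P Q Pm Qm x.
  assert (Hcx : c * x = 1) by (subst c; field; lra).
  assert (Hc1 : 1 < c).
  { subst c. apply (Rmult_lt_reg_r x); auto. unfold Rdiv. rewrite Rmult_assoc, Rinv_l; lra. }
  assert (HwX : w * (Q * c + Qm) = P * c + Pm).
  { assert (Hx : x = 1 / c).
    { apply (Rmult_eq_reg_l c); [|lra]. rewrite Hcx. field. lra. }
    rewrite Hx in A.
    transitivity (c * (w * (Q + Qm * (1 / c)))); [field; lra|].
    rewrite A. field. lra. }
  assert (HX : 0 < Q * c + Qm) by nra.
  set (X := Q * c + Qm) in *.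
  assert (Hb' : (P - Q * w) * X = - sg).
  { transitivity (P * X - Q * (w * X)); [ring|]. rewrite HwX. unfold X. lra. }
  assert (Ha' : (Pm - Qm * w) * X = sg * c).
  { transitivity (Pm * X - Qm * (w * X)); [ring|]. rewrite HwX. unfold X.
    replace sg with (- (P * Qm - Pm * Q)) by lra. ring. }
  assert (Ha : 0 < Pm - Qm * w') by nra.
  assert (Hb : 0 < P - Q * w') by nra.
  assert (Ea : Pm - Qm * w' = Pm - Qm * w + Qm * s) by (rewrite <- Hdiff; ring).
  assert (Eb : P - Q * w' = P - Q * w + Q * s) by (rewrite <- Hdiff; ring).
  assert (Ea2 : Pm - Qm * w = sg * c / X) by (rewrite <- Ha'; field; lra).
  assert (Eb2 : P - Q * w = - sg / X) by (rewrite <- Hb'; field; lra).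
  assert (HX0 : X <> 0) by lra.
  assert (Hc0 : c <> 0) by lra.
  destruct Hsg as [E|E]; rewrite E in *.
  - rewrite (Rabs_right ((Pm - Qm * w') * (Pm - Qm * w))).
    2:{ rewrite Ea2. apply Rle_ge, Rmult_le_pos; [lra|]. apply Rlt_le, Rdiv_lt_0_compat; lra. }
    rewrite (Rabs_left ((P - Q * w') * (P - Q * w))).
    2:{ rewrite Eb2. apply Rmult_pos_neg; [lra|]. unfold Rdiv. rewrite Ropp_mult_distr_l_reverse. 
        apply Ropp_lt_gt_0_contravar. rewrite Rmult_1_l. apply Rinv_0_lt_compat; lra. }
    rewrite Eb, Ea, Ea2, Eb2. unfold X. split; field; auto.
  - rewrite (Rabs_left ((Pm - Qm * w') * (Pm - Qm * w))).
    2:{ rewrite Ea2. apply Rmult_pos_neg; [lra|]. unfold Rdiv.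
        replace (-1 * c * / X) with (- (c * / X)) by ring.
        apply Ropp_lt_gt_0_contravar. apply Rdiv_lt_0_compat; lra. }
    rewrite (Rabs_right ((P - Q * w') * (P - Q * w))).
    2:{ rewrite Eb2. apply Rle_ge, Rmult_le_pos; [lra|]. replace (- -1) with 1 by ring.
        apply Rlt_le, Rdiv_lt_0_compat; lra. }
    rewrite Eb, Ea, Ea2, Eb2. unfold X. split; field; auto.
Qed.
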